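(* Let $n\ge1$, $m>1$, $a\in\mathbb{R}^n$, $d\in\mathbb{R}^m$ with $\|a\|\le\|d\|$, $S_{\le0}=\{(x,y)\in\mathbb{R}^{n+m}:\|x\|\le\|y\|,\ a^\mathsf{T} x+d^\mathsf{T} y\le0\}$, and $\lambda\in\mathbb{R}^n$ with $\|\lambda\|=1$. Let $C_\lambda=\{(x,y):\lambda^\mathsf{T} x\ge\|y\|\}$, $G(\lambda)=\{\beta\in\mathbb{R}^m:\|\beta\|=1,\ a^\mathsf{T}\lambda+d^\mathsf{T}\beta\le0\}$ and $C_{G(\lambda)}=\{(x,y):-\lambda^\mathsf{T} x+\beta^\mathsf{T} y\le0\ \forall\beta\in G(\lambda)\}$. If $C_{G(\lambda)}\neq\emptyset$ and $C$ is any $S_{\le0}$-free convex set with $C_\lambda\subseteq C$, then $C\subseteq C_{G(\lambda)}$.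
   Context: $\|\cdot\|$ is the Euclidean norm. A convex set $C$ is $S$-free if $\operatorname{int}(C)\cap S=\emptyset$. *)

(* Defs.v *)
(* Points of R^{n+m} are pairs (x,y) with x : 'rV[R]_n, y : 'rV[R]_m. *)
From HB Require Import structures.
From mathcomp Require Import all_boot all_order all_algebra.
From mathcomp Require Import reals.
Set Implicit Arguments. Unset Strict Implicit. Unset Printing Implicit Defensive.
Import Order.TTheory GRing.Theory Num.Theory.
Local Open Scope ring_scope.

Section Defs.
Variable R : realType.

Definition dotv (k : nat) (u v : 'rV[R]_k) : R := \sum_(i < k) u 0 i * v 0 i.
Definition enorm (k : nat) (u : 'rV[R]_k) : R := Num.sqrt (dotv u u).

Definition pnorm (n m : nat) (z : 'rV[R]_n * 'rV[R]_m) : R :=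
  Num.sqrt (dotv z.1 z.1 + dotv z.2 z.2).

Definition interior_e (n m : nat) (C : 'rV[R]_n * 'rV[R]_m -> Prop)
  (z : 'rV[R]_n * 'rV[R]_m) : Prop :=
  exists2 eps : R, 0 < eps &
    forall w : 'rV[R]_n * 'rV[R]_m,
      pnorm (w.1 - z.1, w.2 - z.2) < eps -> C w.

Definition convex_e (n m : nat) (C : 'rV[R]_n * 'rV[R]_m -> Prop) : Prop :=
  forall (z w : 'rV[R]_n * 'rV[R]_m) (t : R), C z -> C w -> 0 <= t -> t <= 1 ->
    C (t *: z.1 + (1 - t) *: w.1, t *: z.2 + (1 - t) *: w.2).

Definition S_free (n m : nat) (S C : 'rV[R]_n * 'rV[R]_m -> Prop) : Prop :=
  convex_e C /\ (forall z, interior_e C z -> S z -> False).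

Definition S_le0 (n m : nat) (a : 'rV[R]_n) (d : 'rV[R]_m)
  (z : 'rV[R]_n * 'rV[R]_m) : Prop :=
  enorm z.1 <= enorm z.2 /\ dotv a z.1 + dotv d z.2 <= 0.

Definition C_lam (n m : nat) (lam : 'rV[R]_n) (z : 'rV[R]_n * 'rV[R]_m) : Prop :=
  dotv lam z.1 >= enorm z.2.

Definition G_lam (n m : nat) (a lam : 'rV[R]_n) (d : 'rV[R]_m) (beta : 'rV[R]_m) : Prop :=
  enorm beta = 1 /\ dotv a lam + dotv d beta <= 0.

Definition C_G (n m : nat) (a lam : 'rV[R]_n) (d : 'rV[R]_m)
  (z : 'rV[R]_n * 'rV[R]_m) : Prop :=
  forall beta, G_lam a lam d beta -> - dotv lam z.1 + dotv beta z.2 <= 0.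

End Defs.

(* Main.v *)
Require Import Defs.
From HB Require Import structures.
From mathcomp Require Import all_boot all_order all_algebra.
From mathcomp Require Import reals.
From mathcomp Require Import ring lra.
Set Implicit Arguments. Unset Strict Implicit. Unset Printing Implicit Defensive.
Import Order.TTheory GRing.Theory Num.Theory.
Local Open Scope ring_scope.

Section Helpers.
Variable R : realType.
Implicit Types (k : nat).

Lemma dotC k (u v : 'rV[R]_k) : dotv u v = dotv v u.
Proof. by rewrite /dotv; apply: eq_bigr => i _; rewrite mulrC. Qed.

Lemma dotDl k (u v w : 'rV[R]_k) : dotv (u + v) w = dotv u w + dotv v w.
Proof. by rewrite /dotv -big_split; apply: eq_bigr => i _; rewrite mxE mulrDl. Qed.

Lemma dotZl k (c : R) (u w : 'rV[R]_k) : dotv (c *: u) w = c * dotv u w.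
Proof. by rewrite /dotv mulr_sumr; apply: eq_bigr => i _; rewrite mxE mulrA. Qed.

Lemma dotNl k (u w : 'rV[R]_k) : dotv (- u) w = - dotv u w.
Proof. by rewrite -scaleN1r dotZl mulN1r. Qed.

Lemma dotBl k (u v w : 'rV[R]_k) : dotv (u - v) w = dotv u w - dotv v w.
Proof. by rewrite dotDl dotNl. Qed.

Lemma dotDr k (u v w : 'rV[R]_k) : dotv w (u + v) = dotv w u + dotv w v.
Proof. by rewrite dotC dotDl !(dotC w). Qed.

Lemma dotZr k (c : R) (u w : 'rV[R]_k) : dotv w (c *: u) = c * dotv w u.
Proof. by rewrite dotC dotZl dotC. Qed.

Lemma dotNr k (u w : 'rV[R]_k) : dotv w (- u) = - dotv w u.
Proof. by rewrite dotC dotNl dotC. Qed.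

Lemma dotBr k (u v w : 'rV[R]_k) : dotv w (u - v) = dotv w u - dotv w v.
Proof. by rewrite dotDr dotNr. Qed.

Lemma dot_ge0 k (u : 'rV[R]_k) : 0 <= dotv u u.
Proof. by rewrite /dotv; apply: sumr_ge0 => i _; rewrite -expr2 sqr_ge0. Qed.

Definition dotE := (dotDl, dotDr, dotZl, dotZr, dotNl, dotNr, dotBl, dotBr).

Lemma CS k (u v : 'rV[R]_k) : dotv u v ^+ 2 <= dotv u u * dotv v v.
Proof.
have hu := dot_ge0 u; have hv := dot_ge0 v.
have h1 := dot_ge0 (dotv v v *: u - dotv u v *: v).
have h2 := dot_ge0 (dotv u u *: v - dotv u v *: u).
have h3 := dot_ge0 (u - v); have h4 := dot_ge0 (u + v).
move: h1 h2 h3 h4; rewrite !dotE (dotC v u).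
set a := dotv u u; set b := dotv v v; set c := dotv u v => h1 h2 h3 h4.
have [hb|hb] := ltrP 0 b.
  have : 0 <= b * (a * b - c ^+ 2).
    by apply: le_trans h1 _; rewrite le_eqVlt; apply/orP; left; apply/eqP; ring.
  by rewrite pmulr_rge0 // subr_ge0 => ->.
have b0 : b = 0 by apply/eqP; rewrite eq_le hb hv.
have [ha|ha] := ltrP 0 a.
  have : 0 <= a * (a * b - c ^+ 2).
    by apply: le_trans h2 _; rewrite le_eqVlt; apply/orP; left; apply/eqP; ring.
  by rewrite pmulr_rge0 // subr_ge0 mulrC => ->.
have a0 : a = 0 by apply/eqP; rewrite eq_le ha hu.
move: h3 h4; rewrite a0 b0 => h3 h4.
have c0 : c = 0 by lra.
by rewrite c0 expr2 !mul0r.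
Qed.

Lemma sqrt_le_sq (x y : R) : 0 <= y -> x <= y ^+ 2 -> Num.sqrt x <= y.
Proof.
move=> y0 h; have := ler_wsqrtr h; by rewrite sqrtr_sqr ger0_norm.
Qed.

Lemma CSabs k (u v : 'rV[R]_k) : `|dotv u v| <= enorm u * enorm v.
Proof.
rewrite /enorm -sqrtrM ?dot_ge0 // -sqrtr_sqr.
by apply: ler_wsqrtr; apply: CS.
Qed.

Lemma tri k (u v : 'rV[R]_k) : enorm (u + v) <= enorm u + enorm v.
Proof.
rewrite {1}/enorm; apply: sqrt_le_sq; first by rewrite addr_ge0 ?sqrtr_ge0.
have := CSabs u v; rewrite !dotE (dotC v u).
have := sqr_sqrtr (dot_ge0 u); have := sqr_sqrtr (dot_ge0 v).
rewrite /enorm.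
set a := Num.sqrt (dotv u u); set b := Num.sqrt (dotv v v).
move=> hb ha hc.
have : dotv u v <= a * b by apply: le_trans (ler_norm _) hc.
nra.
Qed.


Lemma normalize k (b d f : 'rV[R]_k) : 0 < dotv f f -> dotv b f = 0 ->
  exists e, [/\ dotv b e = 0, dotv e e = 1 & dotv d e = dotv d f / Num.sqrt (dotv f f)].
Proof.
move=> hf hb; exists ((Num.sqrt (dotv f f))^-1 *: f).
have hs : 0 < Num.sqrt (dotv f f) by rewrite sqrtr_gt0.
have hs2 := sqr_sqrtr (ltW hf).
split; rewrite ?dotE ?hb ?mulr0 //; last by rewrite mulrC.
rewrite mulrA -{3}hs2; field; lra.
Qed.

Lemma dot_delta k (i : 'I_k) (u : 'rV[R]_k) : dotv (delta_mx 0 i) u = u 0 i.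
Proof.
rewrite /dotv (bigD1 i) //= big1 ?addr0; first by rewrite mxE !eqxx mul1r.
by move=> j hj; rewrite mxE (negbTE hj) andbF mul0r.
Qed.

Lemma dot_two k (i j : 'I_k) (u : 'rV[R]_k) : i != j ->
  u 0 i ^+ 2 + u 0 j ^+ 2 <= dotv u u.
Proof.
move=> hij; rewrite /dotv (bigD1 i) //= (bigD1 j) 1?eq_sym //= -!expr2 addrA.
rewrite lerDl; apply: sumr_ge0 => l _; rewrite -expr2 sqr_ge0 //.
Qed.

Lemma unit_perp k (b : 'rV[R]_k) : (1 < k)%N -> dotv b b = 1 ->
  exists e, dotv b e = 0 /\ dotv e e = 1.
Proof.
move=> hk hb.
pose i0 := Ordinal (ltnW hk). pose i1 := Ordinal hk.
have hne : i0 != i1 by [].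
have h2 := dot_two b hne.
pose f (i : 'I_k) := delta_mx 0 i - b 0 i *: b.
have hbf i : dotv b (f i) = 0.
  by rewrite /f !dotE hb (dotC b (delta_mx 0 i)) dot_delta; ring.
have hff i : dotv (f i) (f i) = 1 - b 0 i ^+ 2.
  rewrite /f !dotE hb (dotC b (delta_mx 0 i)) !dot_delta mxE !eqxx mulr1n; ring.
have [h|h] := ltrP (b 0 i0 ^+ 2) 1.
  have [e [? ? _]] := @normalize _ b b (f i0) ltac:(rewrite hff; lra) (hbf i0).
  by exists e.
have hp : 0 < dotv (f i1) (f i1).
  rewrite hff; have := sqr_ge0 (b 0 i1); lra.
have [e [? ? _]] := @normalize _ b b (f i1) hp (hbf i1).
by exists e.
Qed.

Lemma perp_dir k (b d : 'rV[R]_k) : (1 < k)%N -> dotv b b = 1 ->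
  exists e, [/\ dotv b e = 0, dotv e e = 1 &
     dotv d e <= - Num.sqrt (dotv d d - dotv d b ^+ 2)].
Proof.
move=> hk hb.
pose f := dotv d b *: b - d.
have hbf : dotv b f = 0.
  by rewrite /f !dotE hb (dotC b d) mulr1 subrr.
have hff : dotv f f = dotv d d - dotv d b ^+ 2.
  by rewrite /f !dotE hb (dotC b d); ring.
have [hq|hq] := ltrP 0 (dotv d d - dotv d b ^+ 2).
  have [e [h1 h2 h3]] := @normalize _ b d f ltac:(by rewrite hff) hbf.
  exists e; split => //; rewrite h3 hff.
  have hdf : dotv d f = - (dotv d d - dotv d b ^+ 2).
    by rewrite /f !dotE (dotC d b); ring.
  rewrite hdf -{1}(sqr_sqrtr (ltW hq)) expr2 mulNr mulfK //.
  by rewrite gt_eqF // sqrtr_gt0.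
have [e0 [h1 h2]] := unit_perp hk hb.
rewrite ler0_sqrtr // oppr0.
have [hs|hs] := lerP (dotv d e0) 0; first by exists e0.
exists (- e0); split; rewrite ?dotE ?h1 ?h2 ?opprK; try lra.
Qed.


Lemma sq1 (x : R) : 0 <= x -> Num.sqrt x = 1 -> x = 1.
Proof. by move=> h0 h; rewrite -(sqr_sqrtr h0) h expr1n. Qed.

Lemma lt_sq_of_sqrt (x y : R) : 0 <= y -> Num.sqrt x < y -> x < y ^+ 2.
Proof.
move=> y0 h; rewrite ltNge; apply/negP => hX.
by have := ler_wsqrtr hX; rewrite sqrtr_sqr ger0_norm //; lra.
Qed.

End Helpers.

Unset Implicit Arguments.

Ltac vec_eq := apply/rowP => i; rewrite !mxE; field.

Theorem proposition1 (R : realType) (n m : nat) (hn : (1 <= n)%N) (hm : (1 < m)%N)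
  (a : 'rV[R]_n) (d : 'rV[R]_m) (had : enorm a <= enorm d)
  (lam : 'rV[R]_n) (hlam : enorm lam = 1)
  (hCG : exists z : 'rV[R]_n * 'rV[R]_m, C_G a lam d z)
  (C : 'rV[R]_n * 'rV[R]_m -> Prop)
  (hC : S_free (S_le0 a d) C)
  (hsub : forall z, C_lam lam z -> C z) :
  forall z, C z -> C_G a lam d z.
Proof.
move=> z Cz beta [hb1 hbG].
have Ql : dotv lam lam = 1 := sq1 (dot_ge0 _) hlam.
have Qb : dotv beta beta = 1 := sq1 (dot_ge0 _) hb1.
rewrite leNgt; apply/negP => hdel.
set del := - dotv lam z.1 + dotv beta z.2 in hdel.
have [e [be ee de]] := @perp_dir _ _ beta d hm Qb.
set p := dotv lam z.1 in del hdel.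
pose z1p := z.1 - p *: lam.
pose r2 := dotv z1p z1p.
have r2E : r2 = dotv z.1 z.1 - p ^+ 2.
  by rewrite /r2 /z1p !dotE Ql (dotC z.1 lam) -/p; ring.
pose qa := dotv a a - dotv a lam ^+ 2.
pose qd := dotv d d - dotv d beta ^+ 2.
pose s := - (dotv a lam + dotv d beta).
have s0 : 0 <= s by rewrite /s oppr_ge0.
pose sr := Num.sqrt r2.
have sr0 : 0 <= sr := sqrtr_ge0 _.
have sr2 : sr ^+ 2 = r2 := sqr_sqrtr (dot_ge0 _).
pose g := p *: beta + sr *: e - z.2.
pose K := dotv g g / del.
have KE : K * del = dotv g g by rewrite /K divfK // gt_eqF.
have K0 : 0 <= K by rewrite /K divr_ge0 ?dot_ge0 // ltW.
pose T := sr * Num.sqrt qa / s.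
have T0 : 0 <= T by rewrite /T divr_ge0 // mulr_ge0 // sqrtr_ge0.
pose M := K + del + `|p| + T.
have hp := ler_norm (- p); rewrite normrN in hp.
have hp0 := normr_ge0 p.
have hMdel : dotv g g <= M * del by rewrite /M; nra.
pose w1 := z.1 + M *: lam.
pose w2 := (M + p) *: beta + sr *: e.
pose P := (2^-1 *: w1, 2^-1 *: w2).
have hMd : del <= M by rewrite /M; lra.
apply: (hC.2 P).
  exists (del / 8); first by lra.
  case=> u1 u2 /= hw.
  rewrite /pnorm /= in hw.
  have d8 : 0 <= del / 8 by lra.
  have hX := lt_sq_of_sqrt d8 hw.
  pose c2 := w2 - z.2.
  have c2E : c2 = M *: beta + g by rewrite /c2 /w2 /g; vec_eq.
  have hbg : dotv beta g = - del by rewrite /g !dotE Qb be /del; ring.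
  clearbody g.
  have Qc2 : dotv c2 c2 <= (M - del / 2) ^+ 2.
    rewrite c2E !dotE Qb hbg (dotC g beta) hbg; nra.
  have nc2 : enorm c2 <= M - del / 2 by apply: sqrt_le_sq => //; lra.
  pose E1 := 2 *: u1 - z.1 - M *: lam. pose E2 := 2 *: u2 - z.2 - c2.
  have E1E : E1 = 2 *: (u1 - 2^-1 *: w1) by rewrite /E1 /w1; vec_eq.
  have E2E : E2 = 2 *: (u2 - 2^-1 *: w2) by rewrite /E2 /c2; vec_eq.
  have q1 := dot_ge0 (u1 - 2^-1 *: w1).
  have q2 := dot_ge0 (u2 - 2^-1 *: w2).
  have QE1 : dotv E1 E1 <= (del / 4) ^+ 2 by rewrite E1E dotZl dotZr; nra.
  have QE2 : dotv E2 E2 <= (del / 4) ^+ 2 by rewrite E2E dotZl dotZr; nra.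
  have nE1 : enorm E1 <= del / 4 by apply: sqrt_le_sq => //; lra.
  have nE2 : enorm E2 <= del / 4 by apply: sqrt_le_sq => //; lra.
  have Cc' : C (2 *: u1 - z.1, 2 *: u2 - z.2).
    apply: hsub; rewrite /C_lam /=.
    have -> : 2 *: u1 - z.1 = M *: lam + E1 by rewrite /E1 [M *: lam + _]addrC subrK.
    have -> : 2 *: u2 - z.2 = c2 + E2 by rewrite /E2 [c2 + _]addrC subrK.
    rewrite dotDr dotZr Ql.
    have h1 := CSabs lam E1; rewrite hlam mul1r in h1.
    have h1' := ler_norm (- dotv lam E1); rewrite normrN in h1'.
    have h2 := tri c2 E2.
    lra.
  have E : (2^-1 *: z.1 + (1 - 2^-1) *: (2 *: u1 - z.1),
            2^-1 *: z.2 + (1 - 2^-1) *: (2 *: u2 - z.2)) = (u1, u2).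
    by congr pair; vec_eq.
  have := hC.1 z (2 *: u1 - z.1, 2 *: u2 - z.2) (2^-1) Cz Cc'.
  by rewrite /= E; apply; lra.
have Qw : dotv w1 w1 = dotv w2 w2.
  rewrite /w1 /w2 !dotE Ql Qb ee (dotC e beta) be (dotC z.1 lam) -/p.
  have : sr * sr = dotv z.1 z.1 - p ^+ 2 by rewrite -expr2 sr2 r2E.
  nra.
split.
  by rewrite /enorm /P /= !dotZl !dotZr Qw.
have hlin : dotv a w1 + dotv d w2 <= 0.
  pose ap := a - dotv a lam *: lam.
  have hap : dotv ap ap = qa.
    rewrite /ap /qa !dotE Ql (dotC lam a) mulr1 expr2. ring.
  have hapz : dotv ap z1p = dotv a z.1 - p * dotv a lam.
    by rewrite /ap /z1p !dotE Ql -/p; ring.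
  have hcs := CSabs ap z1p.
  rewrite /enorm hap -/r2 -/sr hapz in hcs.
  have hcs' := le_trans (ler_norm _) hcs.
  have -> : dotv a w1 + dotv d w2 = dotv a z.1 + M * dotv a lam
       + (M + p) * dotv d beta + sr * dotv d e by rewrite /w1 /w2 !dotE; ring.
  rewrite -/qd in de.
  have hde : sr * dotv d e <= sr * - Num.sqrt qd by rewrite ler_wpM2l.
  have sqd0 : 0 <= sr * Num.sqrt qd by rewrite mulr_ge0 // sqrtr_ge0.
  have [spos|sz] : 0 < s \/ s = 0.
    by move: s0; rewrite le_eqVlt => /orP [/eqP ->|->]; [right|left].
    have sT : s * T = sr * Num.sqrt qa by rewrite /T mulrC divfK // gt_eqF.
    have hMT : 0 <= (M + p - T) * s by rewrite mulr_ge0 // /M; lra.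
    rewrite /s in sT hMT; nra.
  have hal : dotv a lam = - dotv d beta by rewrite /s in sz; lra.
  have hQ : dotv a a <= dotv d d by move: had; rewrite /enorm ler_sqrt // dot_ge0.
  have hq : qa <= qd by rewrite /qa /qd hal sqrrN; lra.
  have hsq : sr * Num.sqrt qa <= sr * Num.sqrt qd by rewrite ler_wpM2l // ler_wsqrtr.
  rewrite hal; nra.
rewrite /P /= !dotZr -mulrDr pmulr_rle0 // invr_gt0; lra.
Qed.
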